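(* Let $N$ be a positive integer, let $a_1\ge a_2\ge a_3$ be real numbers, and for $i=1,\dots,N$ let $\varphi_i(l,m,n,s)$ be real-valued functions of integers $l,m,n,s$. Write $\varphi_i(s)=\varphi_i(l,m,n,s)$ and $\boldsymbol\varphi(s)=(\varphi_1(s),\dots,\varphi_N(s))^T$. Suppose that for all integers $l,m,n,s$ and all $1\le i,i_1,i_2\le N$: (1) $\varphi_i(l+1,m,n,s)=\max(\varphi_i(l,m,n,s),\varphi_i(l,m,n,s+1)-a_1)$, $\varphi_i(l,m+1,n,s)=\max(\varphi_i(l,m,n,s),\varphi_i(l,m,n,s+1)-a_2)$, $\varphi_i(l,m,n+1,s)=\max(\varphi_i(l,m,n,s),\varphi_i(l,m,n,s+1)-a_3)$; (2) $\varphi_{i_1}(s)+\varphi_{i_2}(s)\le\max\big(\varphi_{i_1}(s-1)+\varphi_{i_2}(s+1),\ \varphi_{i_2}(s-1)+\varphi_{i_1}(s+1)\big)$; (3) for all integers $0\le k_1<k_2<k_3\le N$, $$\begin{aligned}&\mathrm{UP}[\boldsymbol\varphi(0)\cdots\widehat{\boldsymbol\varphi(k_2)}\cdots\boldsymbol\varphi(N)]+\mathrm{UP}[\boldsymbol\varphi(0)\cdots\widehat{\boldsymbol\varphi(k_1)}\cdots\widehat{\boldsymbol\varphi(k_3)}\cdots\boldsymbol\varphi(N+1)]\\ =\max\Big(&\mathrm{UP}[\boldsymbol\varphi(0)\cdots\widehat{\boldsymbol\varphi(k_3)}\cdots\boldsymbol\varphi(N)]+\mathrm{UP}[\boldsymbol\varphi(0)\cdots\widehat{\boldsymbol\varphi(k_1)}\cdots\widehat{\boldsymbol\varphi(k_2)}\cdots\boldsymbol\varphi(N+1)],\\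 &\mathrm{UP}[\boldsymbol\varphi(0)\cdots\widehat{\boldsymbol\varphi(k_1)}\cdots\boldsymbol\varphi(N)]+\mathrm{UP}[\boldsymbol\varphi(0)\cdots\widehat{\boldsymbol\varphi(k_2)}\cdots\widehat{\boldsymbol\varphi(k_3)}\cdots\boldsymbol\varphi(N+1)]\Big)\end{aligned}$$ (all vectors evaluated at the same $(l,m,n)$). Define $\tau(l,m,n)=\mathrm{UP}[\boldsymbol\varphi(0)\ \boldsymbol\varphi(1)\ \cdots\ \boldsymbol\varphi(N-1)]$, i.e. the ultradiscrete permanent of the $N\times N$ matrix $[\varphi_i(l,m,n,j-1)]_{1\le i,j\le N}$. Then for all integers $l,m,n$, $$\tau(l,m+1,n)+\tau(l+1,m,n+1)=\max\big(\tau(l+1,m,n)+\tau(l,m+1,n+1)-a_1+a_2,\ \tau(l,m,n+1)+\tau(l+1,m+1,n)\big).$$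
   Context: For a real $N\times N$ matrix $A=[a_{ij}]$, the ultradiscrete permanent is $\mathrm{UP}[A]=\max_{\pi}(a_{1\pi_1}+\cdots+a_{N\pi_N})$, maximum over all permutations $\pi$ of $\{1,\dots,N\}$. $\mathrm{UP}[\boldsymbol v_1\ \cdots\ \boldsymbol v_N]$ denotes the UP of the matrix with columns $\boldsymbol v_1,\dots,\boldsymbol v_N$ in that order; a hat $\widehat{\boldsymbol\varphi(k)}$ means that column is omitted from the list $\boldsymbol\varphi(0),\boldsymbol\varphi(1),\dots$ (so each matrix in condition (3) has exactly $N$ columns). *)

(* Defs.v *)
(* Reals are taken as an arbitrary realFieldType R
   (the statement only uses +, -, max, order). *)
From HB Require Import structures.
From mathcomp Require Import all_boot all_order all_algebra all_fingroup.
Set Implicit Arguments. Unset Strict Implicit. Unset Printing Implicit Defensive.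
Import Order.TTheory GRing.Theory Num.Theory.
Local Open Scope ring_scope.

(* The fold starts from the value at the identity
   permutation, which is itself one of the terms, so this is exactly
   the maximum. *)
Definition UP (R : realFieldType) (N : nat) (A : 'M[R]_N) : R :=
  \big[Num.max/(\sum_(i < N) A i i)]_(s : 'S_N) \sum_(i < N) A i (s i).

Definition UPcols (R : realFieldType) (N : nat) (v : 'I_N -> int -> R)
  (c : seq nat) : R :=
  UP (\matrix_(i < N, j < N) v i (Posz (nth 0%N c j))).

Definition omit1 (M k : nat) : seq nat := [seq j <- iota 0 M.+1 | j != k].
Definition omit2 (M k k' : nat) : seq nat :=
  [seq j <- iota 0 M.+1 | (j != k) && (j != k')].

(* Main.v *)
Require Import Defs.
From HB Require Import structures.
From mathcomp Require Import all_boot all_order all_algebra all_fingroup.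
From mathcomp Require Import ring lra zify.
Import Order.TTheory GRing.Theory Num.Theory.
Local Open Scope ring_scope.
Set Implicit Arguments. Unset Strict Implicit. Unset Printing Implicit Defensive.

Lemma UP_ge (R : realFieldType) N (A : 'M[R]_N) (s : 'S_N) :
  \sum_i A i (s i) <= UP A.
Proof. rewrite /UP. exact: (le_bigmax _ (fun s : 'S_N => \sum_i A i (s i)) s). Qed.

Lemma UP_att (R : realFieldType) N (A : 'M[R]_N) :
  exists s : 'S_N, UP A = \sum_i A i (s i).
Proof.
rewrite /UP; elim/big_rec: _ => [|s x _ [s0 ->]].
  by exists 1%g; apply: eq_bigr => i _; rewrite perm1.
rewrite maxEle; case: ifP => _; [by exists s0 | by exists s].
Qed.

Lemma sum2 (R : realFieldType) N (F G : 'I_N -> R) (i1 i2 : 'I_N) :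
  i1 != i2 -> (forall i, i != i1 -> i != i2 -> F i = G i) ->
  F i1 + F i2 <= G i1 + G i2 -> \sum_i F i <= \sum_i G i.
Proof.
move=> n12 eqFG le12.
have n21 : i2 != i1 by rewrite eq_sym.
have sp : forall H : 'I_N -> R, \sum_i H i = H i1 + (H i2 + \sum_(i | (i != i1) && (i != i2)) H i).
  by move=> H; rewrite (bigD1 i1) //= (bigD1 i2) //=.
rewrite !sp.
have -> : \sum_(i | (i != i1) && (i != i2)) F i = \sum_(i | (i != i1) && (i != i2)) G i.
  by apply: eq_bigr => i /andP[]; apply: eqFG.
rewrite !addrA lerD2r; exact: le12.
Qed.

Definition Mc (R : realFieldType) N (g : 'I_N -> int -> R) (c : 'I_N -> nat) : 'M[R]_N :=
  \matrix_(i < N, j < N) g i (Posz (c j)).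

Definition conv2 (R : realFieldType) N (g : 'I_N -> int -> R) :=
  forall i1 i2 (s : int), g i1 s + g i2 s <=
     Num.max (g i1 (s - 1) + g i2 (s + 1)) (g i2 (s - 1) + g i1 (s + 1)).

Lemma UP_exch (R : realFieldType) N (g : 'I_N -> int -> R) (c c' : 'I_N -> nat)
  (j k : 'I_N) (s : nat) : conv2 g -> j != k ->
  c j = s.+1 -> c k = s.+1 -> c' j = s -> c' k = s.+2 ->
  (forall x, x != j -> x != k -> c' x = c x) ->
  UP (Mc g c) <= UP (Mc g c').
Proof.
move=> H2 njk cj ck c'j c'k ceq.
have [σ ->] := UP_att (Mc g c).
set i1 := (σ^-1)%g j; set i2 := (σ^-1)%g k.
have s1 : σ i1 = j by rewrite /i1 permKV.
have s2 : σ i2 = k by rewrite /i2 permKV.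
have n12 : i1 != i2 by apply/negP => /eqP e; move/negP: njk; apply; rewrite -s1 -s2 e.
have oth : forall i, i != i1 -> i != i2 -> (σ i != j) && (σ i != k).
  move=> i ni1 ni2; apply/andP; split.
    by apply/negP => /eqP e; move/negP: ni1; apply; rewrite /i1 -e permK.
  by apply/negP => /eqP e; move/negP: ni2; apply; rewrite /i2 -e permK.
have := H2 i1 i2 (Posz s.+1).
have e1 : Posz s.+1 - 1 = Posz s by rewrite -addn1 PoszD addrK.
have e2 : Posz s.+1 + 1 = Posz s.+2 by rewrite -[s.+2]addn1 PoszD.
rewrite e1 e2 le_max => /orP [h|h].
  apply: le_trans (UP_ge _ σ).
  apply: (sum2 n12).
    move=> i ni1 ni2; rewrite !mxE; have /andP[a b] := oth i ni1 ni2.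
    by rewrite ceq.
  by rewrite !mxE s1 s2 cj ck c'j c'k.
apply: le_trans (UP_ge _ (σ * tperm j k)%g).
apply: (sum2 n12).
  move=> i ni1 ni2; rewrite !mxE permM; have /andP[a b] := oth i ni1 ni2.
  by rewrite tpermD 1?eq_sym // ceq.
rewrite !mxE !permM s1 s2 tpermL tpermR cj ck c'j c'k.
by rewrite [X in _ <= X]addrC.
Qed.

Lemma UP_swap (R : realFieldType) N (g : 'I_N -> int -> R) (c : 'I_N -> nat)
  (j k : 'I_N) :
  UP (Mc g c) <= UP (Mc g (fun x => c (tperm j k x))).
Proof.
have [σ ->] := UP_att (Mc g c).
apply: le_trans (UP_ge _ (σ * tperm j k)%g).
by rewrite le_eqVlt; apply/orP; left; apply/eqP/eq_bigr => i _; rewrite !mxE permM tpermK.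
Qed.

Lemma sum2eq (R : realFieldType) N (F G : 'I_N -> R) (i1 i2 : 'I_N) :
  i1 != i2 -> (forall i, i != i1 -> i != i2 -> F i = G i) ->
  F i1 + F i2 = G i1 + G i2 -> \sum_i F i = \sum_i G i.
Proof.
move=> n12 e e12; apply/le_anti/andP; split; apply: (sum2 n12).
- by move=> i a b; rewrite e.
- by rewrite e12.
- by move=> i a b; rewrite e.
- by rewrite e12.
Qed.

Lemma sum2n N (F G : 'I_N -> nat) (i1 i2 : 'I_N) :
  i1 != i2 -> (forall i, i != i1 -> i != i2 -> F i = G i) ->
  (F i1 + F i2 < G i1 + G i2)%N -> (\sum_i F i < \sum_i G i)%N.
Proof.
move=> n12 eqFG le12.
have n21 : i2 != i1 by rewrite eq_sym.
have sp : forall H : 'I_N -> nat, (\sum_i H i = H i1 + (H i2 + \sum_(i | (i != i1) && (i != i2)) H i))%N.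
  by move=> H; rewrite (bigD1 i1) //= (bigD1 i2) //=.
rewrite !sp.
have -> : (\sum_(i | (i != i1) && (i != i2)) F i = \sum_(i | (i != i1) && (i != i2)) G i)%N.
  by apply: eq_bigr => i /andP[]; apply: eqFG.
by rewrite !addnA ltn_add2r.
Qed.

Lemma Mc_ext (R : realFieldType) N (g : 'I_N -> int -> R) (c c' : 'I_N -> nat) :
  (forall x, c x = c' x) -> Mc g c = Mc g c'.
Proof. by move=> e; apply/matrixP => i j; rewrite !mxE e. Qed.

Definition cT N (t : nat -> nat) : 'I_N -> nat := fun j => (j + t j)%N.
Definition Wt (R : realFieldType) N (w : nat -> R) (t : nat -> nat) : R :=
  \sum_(j < N) w (t j).
Definition Ms N (t : nat -> nat) : nat :=
  (\sum_(j < N) ((j + t j) ^ 2 + j * (j + t j)))%N.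
Definition upd (t : nat -> nat) (j a b : nat) : nat -> nat :=
  fun x => if x == j then a else if x == j.+1 then b else t x.

Lemma Ms_bound N K (t : nat -> nat) : (forall x, x < N -> t x <= K)%N ->
  (Ms N t <= N * ((N + K) ^ 2 + N * (N + K)))%N.
Proof.
move=> tb; rewrite /Ms.
have -> : (N * ((N + K) ^ 2 + N * (N + K)) = \sum_(j < N) ((N + K) ^ 2 + N * (N + K)))%N.
  by rewrite sum_nat_const card_ord.
apply: leq_sum => j _; have := tb j (ltn_ord j); have := ltn_ord j.
move=> h1 h2; have h3 : (j + t j <= N + K)%N by lia.
apply: leq_add; first by rewrite leq_exp2r.
by apply: leq_mul; lia.
Qed.

Lemma ord_neq N (x y : 'I_N) : x != y -> (x : nat) != y.
Proof. by apply: contra => /eqP e; apply/eqP/val_inj. Qed.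

Lemma step (R : realFieldType) N K (g : 'I_N -> int -> R) (w : nat -> R) :
  conv2 g ->
  (forall x y, (x.+2 <= y)%N -> (y <= K)%N -> w x.+1 + w y.-1 <= w x + w y) ->
  forall t : nat -> nat, (forall x, x < N -> t x <= K)%N ->
  forall j, (j.+1 < N)%N -> (t j.+1 < t j)%N ->
  exists t', [/\ (forall x, x < N -> t' x <= K)%N, (Ms N t < Ms N t')%N &
     UP (Mc g (cT t)) - Wt N w t <= UP (Mc g (cT t')) - Wt N w t'].
Proof.
move=> H2 wc t tb j hj hd.
pose jo : 'I_N := Ordinal (ltnW hj); pose ko : 'I_N := Ordinal hj.
have njk : jo != ko by apply/negP => /eqP /(congr1 val) /=; lia.
have tjK := tb j (ltnW hj); have tj1K := tb j.+1 hj.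
have offd : forall (t' : nat -> nat) (x : 'I_N), x != jo -> x != ko ->
   upd t' j (t j.+1) (t j) x = t' x /\
   (forall a b, upd t' j a b x = t' x).
  move=> t' x nj nk; have /negbTE e1 := ord_neq nj; have /negbTE e2 := ord_neq nk.
  by rewrite /upd /= e1 e2; split => // a b; rewrite e1 e2.
have jj : (j.+1 == j) = false by apply/negbTE; rewrite neq_ltn ltnSn orbT.
case: (eqVneq (t j) (t j.+1).+1) => [eA|nA].
- exists (upd t j (t j.+1) (t j)); split.
  + move=> x xN; rewrite /upd; case: ifP => _ //; case: ifP => _ //; exact: tb.
  + rewrite /Ms; apply: (sum2n njk).
      by move=> x a b; have [-> _] := offd t x a b.
    rewrite /upd /= !eqxx jj eA; nia.
  + apply: lerB.
      apply: (UP_exch (j:=jo) (k:=ko) (s := (j + t j.+1)%N)) => //;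
        try by rewrite /cT /upd /= ?eqxx ?jj ?eA; lia.
      by move=> x a b; rewrite /cT; have [-> _] := offd t x a b.
    rewrite /Wt; apply: (sum2 njk).
      by move=> x a b; have [-> _] := offd t x a b.
    by rewrite /upd /= !eqxx jj addrC.
- have hB : ((t j.+1).+2 <= t j)%N by rewrite ltn_neqAle eq_sym nA hd.
  exists (upd t j (t j.+1).+1 (t j).-1); split.
  + move=> x xN; rewrite /upd; case: ifP => _; first by lia.
    case: ifP => _; [lia | exact: tb].
  + rewrite /Ms; apply: (sum2n njk).
      by move=> x a b; have [_ ->] := offd t x a b.
    rewrite /upd /= !eqxx jj.
    have -> : (t j).-1 = (t j - 1)%N by lia.
    nia.
  + apply: lerB.
      apply: le_trans (UP_swap g (cT t) jo ko) _.
      rewrite le_eqVlt; apply/orP; left; apply/eqP; congr UP; apply: Mc_ext => x.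
      rewrite /cT.
      case: (eqVneq x jo) => [->|nj]; first by rewrite tpermL /upd /= eqxx; lia.
      case: (eqVneq x ko) => [->|nk]; first by rewrite tpermR /upd /= eqxx jj; lia.
      by rewrite tpermD 1?eq_sym //; have [_ ->] := offd t x nj nk.
    rewrite /Wt; apply: (sum2 njk).
      by move=> x a b; have [_ ->] := offd t x a b.
    rewrite /upd /= !eqxx jj [X in _ <= X]addrC; exact: wc.
Qed.

Lemma reduce (R : realFieldType) N K (g : 'I_N -> int -> R) (w : nat -> R) :
  conv2 g ->
  (forall x y, (x.+2 <= y)%N -> (y <= K)%N -> w x.+1 + w y.-1 <= w x + w y) ->
  forall t : nat -> nat, (forall x, x < N -> t x <= K)%N ->
  exists t', [/\ (forall x, x < N -> t' x <= K)%N,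
     (forall x, x.+1 < N -> t' x <= t' x.+1)%N &
     UP (Mc g (cT t)) - Wt N w t <= UP (Mc g (cT t')) - Wt N w t'].
Proof.
move=> H2 wc t tb.
set Mb := (N * ((N + K) ^ 2 + N * (N + K)))%N.
move: {2}(Mb - Ms N t)%N (leqnn (Mb - Ms N t)) => d.
elim: d t tb => [|d IH] t tb hd;
  (case: (boolP [exists j : 'I_N, (j.+1 < N)%N && (t j.+1 < t j)%N]) => [/existsP [j /andP [hj hlt]]|hno]).
- have [t' [tb' hlt' hF]] := step H2 wc tb hj hlt.
  have := Ms_bound tb'; rewrite -/Mb; lia.
- exists t; split; [exact: tb| |exact: lexx].
  move=> x hx; have xN : (x < N)%N by lia.
  move/existsPn: hno => /(_ (Ordinal xN)) /=; rewrite hx /=; lia.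
- have [t' [tb' hlt' hF]] := step H2 wc tb hj hlt.
  have [t'' [tb'' hm hF']] := IH t' tb' ltac:(have := Ms_bound tb'; rewrite -/Mb; lia).
  exists t''; split => //; exact: le_trans hF hF'.
- exists t; split; [exact: tb| |exact: lexx].
  move=> x hx; have xN : (x < N)%N by lia.
  move/existsPn: hno => /(_ (Ordinal xN)) /=; rewrite hx /=; lia.
Qed.

Lemma tau_lb (R : realFieldType) N K (g : 'I_N -> int -> R) (w : nat -> R)
  (E : 'I_N -> nat -> R) :
  (forall i j t, (t <= K)%N -> g i (Posz (j + t)) - w t <= E i j) ->
  forall t : nat -> nat, (forall x, x < N -> t x <= K)%N ->
  UP (Mc g (cT t)) - Wt N w t <= UP (\matrix_(i < N, j < N) E i j).
Proof.
move=> hE1 t tb.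
have [σ ->] := UP_att (Mc g (cT t)).
rewrite /Wt [X in _ - X](reindex_inj (@perm_inj _ σ)) -sumrB.
apply: le_trans (UP_ge _ σ); apply: ler_sum => i _; rewrite !mxE /cT.
apply: hE1; exact: tb _ (ltn_ord _).
Qed.

Lemma tau_att (R : realFieldType) N K (g : 'I_N -> int -> R) (w : nat -> R)
  (E : 'I_N -> nat -> R) :
  conv2 g ->
  (forall x y, (x.+2 <= y)%N -> (y <= K)%N -> w x.+1 + w y.-1 <= w x + w y) ->
  (forall i j t, (t <= K)%N -> g i (Posz (j + t)) - w t <= E i j) ->
  (forall i j, exists t, (t <= K)%N /\ E i j <= g i (Posz (j + t)) - w t) ->
  exists t, [/\ (forall x, x < N -> t x <= K)%N,
     (forall x, x.+1 < N -> t x <= t x.+1)%N &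
     UP (\matrix_(i < N, j < N) E i j) = UP (Mc g (cT t)) - Wt N w t].
Proof.
move=> H2 wc hE1 hE2.
have [σ Hσ] := UP_att (\matrix_(i < N, j < N) E i j).
have [f hf] := fin_all_exists (fun j : 'I_N => hE2 ((σ^-1)%g j) j).
pose t x := oapp f 0%N (insub x : option 'I_N).
have tb : forall x, (x < N -> t x <= K)%N.
  move=> x _; rewrite /t; case: (insub x) => [j|] //=; exact: (proj1 (hf j)).
have tv : forall j : 'I_N, t j = f j by move=> j; rewrite /t valK.
have le1 : UP (\matrix_(i < N, j < N) E i j) <= UP (Mc g (cT t)) - Wt N w t.
  rewrite Hσ; apply: le_trans (lerB (UP_ge (Mc g (cT t)) σ) (lexx (Wt N w t))).
  rewrite /Wt [X in _ - X](reindex_inj (@perm_inj _ σ)) -sumrB.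
  apply: ler_sum => i _; rewrite !mxE /cT tv.
  by have [_] := hf (σ i); rewrite permK.
have [t' [tb' hm hF]] := reduce H2 wc tb.
exists t'; split => //.
apply/le_anti/andP; split; first exact: le_trans le1 hF.
exact: tau_lb hE1 t' tb'.
Qed.
Lemma filter_iota_all (P : pred nat) a n :
  (forall x, (a <= x < a + n)%N -> P x) -> filter P (iota a n) = iota a n.
Proof.
move=> h; rewrite (@eq_in_filter _ P predT) ?filter_predT // => x.
by rewrite mem_iota => /h.
Qed.

Lemma omit1E M k : (k <= M)%N -> omit1 M k = iota 0 k ++ iota k.+1 (M - k).
Proof.
move=> kM; rewrite /omit1.
have -> : iota 0 M.+1 = iota 0 k ++ k :: iota k.+1 (M - k).
  have e : M.+1 = (k + (1 + (M - k)))%N by lia.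
  by rewrite e !iotaD /= !add0n addn1.
rewrite filter_cat /= eqxx /= !filter_iota_all //; move=> x /andP [a b]; lia.
Qed.

Lemma omit2E M p q : (p < q <= M)%N ->
  omit2 M p q = iota 0 p ++ iota p.+1 (q - p.+1) ++ iota q.+1 (M - q).
Proof.
move=> /andP [pq qM]; rewrite /omit2.
have -> : iota 0 M.+1 = iota 0 p ++ p :: iota p.+1 (q - p.+1) ++ q :: iota q.+1 (M - q).
  have e : M.+1 = (p + (1 + ((q - p.+1) + (1 + (M - q)))))%N by lia.
  have e2 : (p + 1 + (q - p.+1) = q)%N by lia.
  by rewrite e !iotaD /= !add0n e2 !addn1.
rewrite filter_cat /= eqxx /= filter_cat /= eqxx andbF /=.
rewrite !filter_iota_all //; move=> x /andP [a b]; apply/andP; split; lia.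
Qed.

Lemma nth_omit1 M k j : (k <= M)%N -> (j < M)%N ->
  nth 0%N (omit1 M k) j = (j + (k <= j))%N.
Proof.
move=> kM jM; rewrite omit1E // nth_cat size_iota.
case: ltnP => h; first by rewrite nth_iota // ; lia.
by rewrite nth_iota; lia.
Qed.

Lemma nth_omit2 M p q j : (p < q <= M)%N -> (j.+1 < M)%N ->
  nth 0%N (omit2 M p q) j = (j + (p <= j) + (q <= j.+1))%N.
Proof.
move=> hpq jM; have /andP [pq qM] := hpq; rewrite omit2E // nth_cat size_iota.
case: ltnP => h; first by rewrite nth_iota // ; lia.
rewrite nth_cat size_iota; case: ltnP => h2; first by rewrite nth_iota; lia.
by rewrite nth_iota; lia.
Qed.

Lemma omit2_last N p : (p <= N)%N -> omit2 N.+1 p N.+1 = omit1 N p.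
Proof.
move=> pN; rewrite omit2E ?omit1E //; last by apply/andP; split; lia.
by rewrite subnn /= cats0 subSS.
Qed.

Lemma mono2 N (t : nat -> nat) : (forall x, x < N -> t x <= 2)%N ->
  (forall x, x.+1 < N -> t x <= t x.+1)%N ->
  exists A B, [/\ (A <= B)%N, (B <= N)%N &
     forall x, (x < N)%N -> t x = ((A <= x) + (B <= x))%N].
Proof.
elim: N => [|N IH] tb tm; first by exists 0%N, 0%N; split.
have [A [B [AB BN h]]] : exists A B, [/\ (A <= B)%N, (B <= N)%N &
     forall x, (x < N)%N -> t x = ((A <= x) + (B <= x))%N].
  apply: IH.
    by move=> x hx; apply: tb; lia.
  by move=> x hx; apply: tm; lia.
have tNb := tb N (ltnSn N).
have prev : (0 < N)%N -> (t N.-1 <= t N)%N by move=> h0; have := tm N.-1; rewrite prednK //; apply; lia.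
have hprev : (0 < N)%N -> t N.-1 = ((A <= N.-1) + (B <= N.-1))%N by move=> h0; apply: h; lia.
case: (ltnP (t N) 1) => [v0|v1].
  have eAB : A = N /\ B = N.
    case: (posnP N) => [N0|Np]; first by lia.
    have := prev Np; have := hprev Np; lia.
  exists N.+1, N.+1; split => // x hx.
  case: (ltnP x N) => xN; first by rewrite h //; lia.
  have -> : x = N by lia.
  lia.
case: (ltnP (t N) 2) => [v1'|v2].
  have eB : B = N.
    case: (posnP N) => [N0|Np]; first by lia.
    have := prev Np; have := hprev Np; lia.
  exists A, N.+1; split; try lia; move=> x hx.
  case: (ltnP x N) => xN; first by rewrite h //; lia.
  have -> : x = N by lia.
  lia.
exists A, B; split; try lia; move=> x hx.
case: (ltnP x N) => xN; first by rewrite h //.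
have -> : x = N by lia.
lia.
Qed.

Lemma mono1 N (t : nat -> nat) : (forall x, x < N -> t x <= 1)%N ->
  (forall x, x.+1 < N -> t x <= t x.+1)%N ->
  exists A, (A <= N)%N /\ forall x, (x < N)%N -> t x = (A <= x)%N.
Proof.
move=> tb tm.
have [A [B [AB BN h]]] := mono2 (fun x hx => leq_trans (tb x hx) (isT : (1 <= 2)%N)) tm.
exists A; split; first lia.
move=> x hx; have := h x hx; have := tb x hx; lia.
Qed.

Lemma sum_thr (R : realFieldType) N A (c : R) :
  \sum_(x < N) (if (A <= x)%N then c else 0) = (N - A)%:R * c.
Proof.
elim: N => [|N IH]; first by rewrite big_ord0 sub0n mul0r.
rewrite big_ord_recr /= IH.
case: (leqP A N) => h.
  by rewrite subSn // mulrSr mulrDl mul1r.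
have -> : (N.+1 - A = 0)%N by lia.
have -> : (N - A = 0)%N by lia.
by rewrite mul0r addr0.
Qed.

Definition w1 (R : realFieldType) (x : R) (t : nat) : R := if t == 0%N then 0 else x.
Definition w2 (R : realFieldType) (x y : R) (t : nat) : R :=
  if t == 0%N then 0 else if t == 1%N then y else x + y.

Lemma single_shift (R : realFieldType) N (g E : 'I_N -> int -> R) (x : R) :
  conv2 g -> (forall i s, E i s = Num.max (g i s) (g i (s + 1) - x)) ->
  (forall A, (A <= N)%N -> UPcols g (omit1 N A) - (N - A)%:R * x <=
     UP (\matrix_(i < N, j < N) E i (Posz j))) /\
  (exists A, (A <= N)%N /\ UP (\matrix_(i < N, j < N) E i (Posz j)) =
     UPcols g (omit1 N A) - (N - A)%:R * x).
Proof.
move=> H2 hE.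
have wc : forall x0 y0, (x0.+2 <= y0)%N -> (y0 <= 1)%N -> w1 x x0.+1 + w1 x y0.-1 <= w1 x x0 + w1 x y0.
  by move=> x0 y0 a b; lia.
have hE1 : forall i j t, (t <= 1)%N -> g i (Posz (j + t)) - w1 x t <= E i (Posz j).
  move=> i j [|[|t]] // _; rewrite hE le_max.
    by rewrite addn0 /w1 /= subr0 lexx.
  by rewrite /w1 /= PoszD lexx orbT.
have hE2 : forall i j, exists t, (t <= 1)%N /\ E i (Posz j) <= g i (Posz (j + t)) - w1 x t.
  move=> i j; rewrite hE maxEle; case: ifP => _.
    by exists 1%N; rewrite /w1 /= PoszD lexx.
  by exists 0%N; rewrite /w1 /= addn0 subr0 lexx.
have key : forall A, (A <= N)%N ->
  UP (Mc g (cT (fun j => (A <= j)%N : nat))) - Wt N (w1 x) (fun j => (A <= j)%N : nat)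
  = UPcols g (omit1 N A) - (N - A)%:R * x.
  move=> A AN; congr (_ - _).
    by rewrite /UPcols; congr UP; apply/matrixP => i j; rewrite !mxE /cT nth_omit1.
  rewrite /Wt -sum_thr; apply: eq_bigr => j _; rewrite /w1.
  by case: (leqP A j).
split.
  move=> A AN; rewrite -key //.
  by apply: (tau_lb (K := 1%N) (E := fun i j => E i (Posz j))) => // y _; case: (A <= y)%N.
have [t [tb tm ->]] := tau_att (K := 1%N) H2 wc hE1 hE2.
have [A [AN ht]] := mono1 tb tm.
exists A; split => //; rewrite -key //; congr (_ - _).
  by congr UP; apply: Mc_ext => j; rewrite /cT ht.
by apply: eq_bigr => j _; rewrite ht.
Qed.

Lemma max3 (R : realFieldType) (a b c x y : R) : y <= x ->
  let E := Num.max (Num.max a (b - y)) (Num.max b (c - y) - x) in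
  E <= a \/ E <= b - y \/ E <= c - (x + y).
Proof.
move=> yx E; rewrite /E.
rewrite [Num.max a _]maxEle [Num.max b _]maxEle.
case: ifP => h1; try (move/negbT: h1; rewrite -ltNge => h1);
case: ifP => h2; try (move/negbT: h2; rewrite -ltNge => h2);
rewrite maxEle; case: ifP => h3; try (move/negbT: h3; rewrite -ltNge => h3);
  first [left; lra | right; left; lra | right; right; lra].
Qed.

Lemma double_shift (R : realFieldType) N (g F E : 'I_N -> int -> R) (x y : R) :
  conv2 g -> y <= x ->
  (forall i s, F i s = Num.max (g i s) (g i (s + 1) - y)) ->
  (forall i s, E i s = Num.max (F i s) (F i (s + 1) - x)) ->
  (forall A B, (A <= B)%N -> (B <= N)%N ->
     UPcols g (omit2 N.+1 A B.+1) - ((N - A)%:R * y + (N - B)%:R * x) <=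
     UP (\matrix_(i < N, j < N) E i (Posz j))) /\
  (exists A B, [/\ (A <= B)%N, (B <= N)%N &
     UP (\matrix_(i < N, j < N) E i (Posz j)) =
     UPcols g (omit2 N.+1 A B.+1) - ((N - A)%:R * y + (N - B)%:R * x)]).
Proof.
move=> H2 yx hF hE.
have wc : forall x0 y0, (x0.+2 <= y0)%N -> (y0 <= 2)%N -> w2 x y x0.+1 + w2 x y y0.-1 <= w2 x y x0 + w2 x y y0.
  move=> [|x0] [|[|[|y0]]] //= _ _; rewrite /w2 /= add0r; lra.
have e1 : forall j : nat, Posz j + 1 = Posz j.+1 by move=> j; rewrite -addn1 PoszD.
have e2 : forall j : nat, Posz j.+1 + 1 = Posz j.+2 by move=> j; rewrite -[j.+2]addn1 PoszD.
have hE1 : forall i j t, (t <= 2)%N -> g i (Posz (j + t)) - w2 x y t <= E i (Posz j).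
  move=> i j [|[|[|t]]] // _; rewrite hE !hF !le_max /w2 /=.
  - by rewrite addn0 subr0 lexx.
  - by rewrite addn1 e1 lexx !orbT.
  - rewrite addn2 e1 e2; apply/orP; right; have : g i (Posz j.+2) - y <= Num.max (g i j.+1) (g i (Posz j.+2) - y) by rewrite le_max lexx orbT.
    lra.
have hE2 : forall i j, exists t, (t <= 2)%N /\ E i (Posz j) <= g i (Posz (j + t)) - w2 x y t.
  move=> i j; rewrite hE !hF e1 e2.
  case: (max3 (g i j) (g i (Posz j.+1)) (g i (Posz j.+2)) yx) => [h|[h|h]].
  - by exists 0%N; rewrite /w2 /= addn0 subr0.
  - by exists 1%N; rewrite /w2 /= addn1.
  - by exists 2%N; rewrite /w2 /= addn2.
have key : forall A B, (A <= B)%N -> (B <= N)%N ->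
  UP (Mc g (cT (fun j => (A <= j) + (B <= j))%N)) - Wt N (w2 x y) (fun j => (A <= j) + (B <= j))%N
  = UPcols g (omit2 N.+1 A B.+1) - ((N - A)%:R * y + (N - B)%:R * x).
  move=> A B AB BN; congr (_ - _).
    rewrite /UPcols; congr UP; apply/matrixP => i j; rewrite !mxE /cT nth_omit2 //.
    + by congr (g i (Posz _)); lia.
    + by apply/andP; split; lia.
    + by have := ltn_ord j; lia.
  rewrite /Wt -!sum_thr -big_split; apply: eq_bigr => j _ /=; rewrite /w2.
  case: (leqP A j) => h1; case: (leqP B j) => h2 /=; try lia.
  - by rewrite addrC.
  - by rewrite addr0.
  - by rewrite addr0.
split.
  move=> A B AB BN; rewrite -key //.
  apply: (tau_lb (K := 2%N) (E := fun i j => E i (Posz j))) => // z _.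
  by case: (A <= z)%N; case: (B <= z)%N.
have [t [tb tm ->]] := tau_att (K := 2%N) H2 wc hE1 hE2.
have [A [B [AB BN ht]]] := mono2 tb tm.
exists A, B; split => //; rewrite -key //; congr (_ - _).
  by congr UP; apply: Mc_ext => j; rewrite /cT ht.
by apply: eq_bigr => j _; rewrite ht.
Qed.
Lemma pm (R : realFieldType) (i j : nat) (a b : R) : (i <= j)%N -> b <= a ->
  i%:R * a + j%:R * b <= i%:R * b + j%:R * a.
Proof.
move=> ij ba.
have : 0 <= (j%:R - i%:R) * (a - b).
  by apply: mulr_ge0; rewrite subr_ge0 // ler_nat.
lra.
Qed.

Definition sgl (R : realFieldType) N (U : nat -> R) (x t : R) :=
  (forall k, (k <= N)%N -> U k + k%:R * x - N%:R * x <= t) /\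
  (exists k, (k <= N)%N /\ t = U k + k%:R * x - N%:R * x).

Definition dbl (R : realFieldType) N (V : nat -> nat -> R) (x y t : R) :=
  (forall p q, (p < q)%N -> (q <= N.+1)%N ->
     V p q + p%:R * y + q%:R * x - N%:R * x - N%:R * y - x <= t) /\
  (exists p q, [/\ (p < q)%N, (q <= N.+1)%N &
     t = V p q + p%:R * y + q%:R * x - N%:R * x - N%:R * y - x]).

Ltac prods i j A12 A23 :=
  let h := fresh "h" in
  have h : (i <= j)%N := ltac:(lia);
  move: (pm h A12) (pm h A23) (pm h (le_trans A23 A12)); clear h.

Lemma partB (R : realFieldType) N (a1 a2 a3 : R) (U : nat -> R) (V : nat -> nat -> R)
  (t1 t2 t3 t13 t23 t12 : R) :
  a2 <= a1 -> a3 <= a2 ->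
  (forall p, (p <= N)%N -> V p N.+1 = U p) ->
  (forall k1 k2 k3, (k1 < k2)%N -> (k2 < k3)%N -> (k3 <= N)%N ->
     U k2 + V k1 k3 = Num.max (U k3 + V k1 k2) (U k1 + V k2 k3)) ->
  sgl N U a1 t1 -> sgl N U a2 t2 -> sgl N U a3 t3 ->
  dbl N V a1 a3 t13 -> dbl N V a2 a3 t23 -> dbl N V a1 a2 t12 ->
  t2 + t13 = Num.max (t1 + t23 - a1 + a2) (t3 + t12).
Proof.
move=> A12 A23 VN P3 [u1 [k1 [k1N e1]]] [u2 [k2 [k2N e2]]] [u3 [k3 [k3N e3]]]
  [v13 [p13 [q13 [pq13 q13N e13]]]] [v23 [p23 [q23 [pq23 q23N e23]]]]
  [v12 [p12 [q12 [pq12 q12N e12]]]].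
apply/le_anti/andP; split.
-
  rewrite e2 e13 le_max.
  case: (ltngtP k2 p13) => hkp.
  +
    apply/orP; right.
    have := u3 k2 k2N; have := v12 p13 q13 pq13 q13N.
    prods k2 p13 A12 A23; prods k2 q13 A12 A23; prods p13 q13 A12 A23; lra.
  +
    case: (ltngtP k2 q13) => hkq.
    *
      case: (eqVneq q13 N.+1) => hq.
      -- apply/orP; right.
         have := u3 p13 ltac:(lia); have := v12 k2 q13 hkq q13N.
         rewrite hq VN ?VN; try lia.
         prods p13 k2 A12 A23; prods k2 q13 A12 A23; prods p13 q13 A12 A23; lra.
      -- have := P3 p13 k2 q13 hkp hkq ltac:(lia).
         move=> e; have : U k2 + V p13 q13 <= Num.max (U q13 + V p13 k2) (U p13 + V k2 q13) by rewrite e.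
         rewrite le_max => /orP [h|h].
         ++ apply/orP; left.
            have := u1 q13 ltac:(lia); have := v23 p13 k2 hkp ltac:(lia).
            prods p13 k2 A12 A23; prods k2 q13 A12 A23; prods p13 q13 A12 A23; lra.
         ++ apply/orP; right.
            have := u3 p13 ltac:(lia); have := v12 k2 q13 hkq q13N.
            prods p13 k2 A12 A23; prods k2 q13 A12 A23; prods p13 q13 A12 A23; lra.
    *
      apply/orP; left.
      have := u1 k2 k2N; have := v23 p13 q13 pq13 ltac:(lia).
      prods p13 k2 A12 A23; prods q13 k2 A12 A23; prods p13 q13 A12 A23; lra.
    *
      apply/orP; left.
      have := u1 q13 ltac:(lia); have := v23 p13 q13 pq13 q13N.
      rewrite -hkq; prods p13 k2 A12 A23; lra.
  +
    apply/orP; right.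
    have := u3 k2 k2N; have := v12 k2 q13 ltac:(lia) q13N.
    rewrite hkp; prods p13 q13 A12 A23; lra.
- rewrite ge_max; apply/andP; split.
  + rewrite e1 e23.
    case: (ltngtP k1 p23) => hkp.
    * have hP : U k1 + V p23 q23 <= U p23 + V k1 q23.
        case: (eqVneq q23 N.+1) => hq.
          by rewrite hq !VN; try lia; rewrite addrC.
        by rewrite (P3 k1 p23 q23 hkp pq23 ltac:(lia)) le_max lexx orbT.
      have := u2 p23 ltac:(lia); have := v13 k1 q23 ltac:(lia) q23N.
      prods k1 p23 A12 A23; prods k1 q23 A12 A23; prods p23 q23 A12 A23; lra.
    * case: (ltngtP k1 q23) => hkq.
      -- have := u2 k1 k1N; have := v13 p23 q23 pq23 q23N.
         prods p23 k1 A12 A23; prods k1 q23 A12 A23; prods p23 q23 A12 A23; lra.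
      -- have hP : U k1 + V p23 q23 <= U q23 + V p23 k1.
           by rewrite (P3 p23 q23 k1 pq23 hkq k1N) le_max lexx.
         have := u2 q23 ltac:(lia); have := v13 p23 k1 hkp ltac:(lia).
         prods p23 k1 A12 A23; prods q23 k1 A12 A23; prods p23 q23 A12 A23; lra.
      -- have := u2 q23 ltac:(lia); have := v13 p23 q23 pq23 q23N.
         rewrite -hkq; prods p23 k1 A12 A23; lra.
    * have := u2 k1 k1N; have := v13 k1 q23 ltac:(lia) q23N.
      rewrite hkp; prods p23 q23 A12 A23; lra.
  + rewrite e3 e12.
    case: (ltngtP k3 p12) => hkp.
    * have hP : U k3 + V p12 q12 <= U p12 + V k3 q12.
        case: (eqVneq q12 N.+1) => hq.
          by rewrite hq !VN; try lia; rewrite addrC.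
        by rewrite (P3 k3 p12 q12 hkp pq12 ltac:(lia)) le_max lexx orbT.
      have := u2 p12 ltac:(lia); have := v13 k3 q12 ltac:(lia) q12N.
      prods k3 p12 A12 A23; prods k3 q12 A12 A23; prods p12 q12 A12 A23; lra.
    * case: (ltngtP k3 q12) => hkq.
      -- have := u2 k3 k3N; have := v13 p12 q12 pq12 q12N.
         prods p12 k3 A12 A23; prods k3 q12 A12 A23; prods p12 q12 A12 A23; lra.
      -- have := u2 k3 k3N; have := v13 p12 q12 pq12 q12N.
         prods p12 k3 A12 A23; prods q12 k3 A12 A23; prods p12 q12 A12 A23; lra.
      -- have := u2 q12 ltac:(lia); have := v13 p12 q12 pq12 q12N.
         rewrite -hkq; prods p12 k3 A12 A23; lra.
    * have := u2 k3 k3N; have := v13 k3 q12 ltac:(lia) q12N.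
      rewrite hkp; prods p12 q12 A12 A23; lra.
Qed.

Theorem theorem3p1 (R : realFieldType) (N : nat) (a1 a2 a3 : R)
  (phi : 'I_N -> int -> int -> int -> int -> R) :
  (0 < N)%N ->
  a2 <= a1 -> a3 <= a2 ->
  (* (1) *)
  (forall i l m n s,
     phi i (l + 1) m n s = Num.max (phi i l m n s) (phi i l m n (s + 1) - a1)) ->
  (forall i l m n s,
     phi i l (m + 1) n s = Num.max (phi i l m n s) (phi i l m n (s + 1) - a2)) ->
  (forall i l m n s,
     phi i l m (n + 1) s = Num.max (phi i l m n s) (phi i l m n (s + 1) - a3)) ->
  (* (2) *)
  (forall i1 i2 l m n s,
     phi i1 l m n s + phi i2 l m n s <=
     Num.max (phi i1 l m n (s - 1) + phi i2 l m n (s + 1))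
             (phi i2 l m n (s - 1) + phi i1 l m n (s + 1))) ->
  (* (3) *)
  (forall l m n (k1 k2 k3 : nat),
     (k1 < k2)%N -> (k2 < k3)%N -> (k3 <= N)%N ->
     let v := fun i s => phi i l m n s in
     UPcols v (omit1 N k2) + UPcols v (omit2 N.+1 k1 k3) =
     Num.max (UPcols v (omit1 N k3) + UPcols v (omit2 N.+1 k1 k2))
             (UPcols v (omit1 N k1) + UPcols v (omit2 N.+1 k2 k3))) ->
  let tau := fun l m n : int =>
    UP (\matrix_(i < N, j < N) phi i l m n (Posz j)) in
  forall l m n : int,
    tau l (m + 1) n + tau (l + 1) m (n + 1) =
    Num.max (tau (l + 1) m n + tau l (m + 1) (n + 1) - a1 + a2)
            (tau l m (n + 1) + tau (l + 1) (m + 1) n).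
Proof.
move=> N0 a21 a32 eq1 eq2 eq3 h2 h3 tau l m n.
pose g := fun (i : 'I_N) (s : int) => phi i l m n s.
have H2 : conv2 g by move=> i1 i2 s; exact: h2.
pose U k := UPcols g (omit1 N k).
pose V p q := UPcols g (omit2 N.+1 p q).
have sgl_of : forall (E : 'I_N -> int -> R) x,
    (forall i s, E i s = Num.max (g i s) (g i (s + 1) - x)) ->
    sgl N U x (UP (\matrix_(i < N, j < N) E i (Posz j))).
  move=> E x hE; have [ub [A [AN e]]] := single_shift H2 hE; split.
    move=> k kN; have := ub k kN; rewrite /U natrB // mulrBl; lra.
  by exists A; split => //; rewrite e /U natrB // mulrBl; lra.
have dbl_of : forall (F E : 'I_N -> int -> R) x y, y <= x ->
    (forall i s, F i s = Num.max (g i s) (g i (s + 1) - y)) ->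
    (forall i s, E i s = Num.max (F i s) (F i (s + 1) - x)) ->
    dbl N V x y (UP (\matrix_(i < N, j < N) E i (Posz j))).
  move=> F E x y yx hF hE; have [ub [A [B [AB BN e]]]] := double_shift H2 yx hF hE.
  split.
    move=> p [|B'] // hpq hqN.
    have hB : (B'.+1)%:R = B'%:R + 1 :> R by rewrite -addn1 natrD.
    have := ub p B' ltac:(lia) ltac:(lia).
    rewrite /V hB !natrB ?mulrBl; try lia; lra.
  exists A, B.+1; split; try lia.
  have hB : (B.+1)%:R = B%:R + 1 :> R by rewrite -addn1 natrD.
  rewrite e /V hB !natrB ?mulrBl; try lia; lra.
have T1 : sgl N U a1 (tau (l + 1) m n) :=
  sgl_of (fun i s => phi i (l + 1) m n s) a1 (fun i s => eq1 i l m n s).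
have T2 : sgl N U a2 (tau l (m + 1) n) :=
  sgl_of (fun i s => phi i l (m + 1) n s) a2 (fun i s => eq2 i l m n s).
have T3 : sgl N U a3 (tau l m (n + 1)) :=
  sgl_of (fun i s => phi i l m (n + 1) s) a3 (fun i s => eq3 i l m n s).
have T13 : dbl N V a1 a3 (tau (l + 1) m (n + 1)) :=
  dbl_of (fun i s => phi i l m (n + 1) s) (fun i s => phi i (l + 1) m (n + 1) s)
    a1 a3 (le_trans a32 a21) (fun i s => eq3 i l m n s) (fun i s => eq1 i l m (n + 1) s).
have T23 : dbl N V a2 a3 (tau l (m + 1) (n + 1)) :=
  dbl_of (fun i s => phi i l m (n + 1) s) (fun i s => phi i l (m + 1) (n + 1) s)
    a2 a3 a32 (fun i s => eq3 i l m n s) (fun i s => eq2 i l m (n + 1) s).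
have T12 : dbl N V a1 a2 (tau (l + 1) (m + 1) n) :=
  dbl_of (fun i s => phi i l (m + 1) n s) (fun i s => phi i (l + 1) (m + 1) n s)
    a1 a2 a21 (fun i s => eq2 i l m n s) (fun i s => eq1 i l (m + 1) n s).
have VN : forall p, (p <= N)%N -> V p N.+1 = U p.
  by move=> p pN; rewrite /V /U omit2_last.
have P3 : forall k1 k2 k3, (k1 < k2)%N -> (k2 < k3)%N -> (k3 <= N)%N ->
    U k2 + V k1 k3 = Num.max (U k3 + V k1 k2) (U k1 + V k2 k3).
  by move=> k1 k2 k3 a b c; exact: h3 l m n k1 k2 k3 a b c.
exact: partB a21 a32 VN P3 T1 T2 T3 T13 T23 T12.
Qed.
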